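(* Let $G$ be a finite abstract simplicial complex with connection matrix $L$ and $g=L^{-1}$. Then for every $x\in G$, $g(x,x)=\chi(W^+(x))=1-\chi(S(x))$.
   Context: A finite abstract simplicial complex $G$ is a finite set of non-empty finite sets closed under taking non-empty subsets; $\omega(y)=(-1)^{|y|-1}$. The connection matrix $L$ has $L(x,y)=1$ if $x\cap y\neq\emptyset$ and $0$ otherwise. The star is $W^+(x)=\{y\in G: x\subseteq y\}$ and $\chi(W^+(x))=\sum_{y\in W^+(x)}\omega(y)$. The graph $G_1$ has vertex set $G$ with $x\neq y$ adjacent iff one contains the other; $S(x)=\{y\in G: y\subsetneq x \text{ or } x\subsetneq y\}$ and $\chi(S(x))$ is the Euler characteristic of the clique complex of the subgraph of $G_1$ induced on $S(x)$. *)

(* Defs.v *)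
From mathcomp Require Import all_boot all_order all_algebra.
Set Implicit Arguments. Unset Strict Implicit. Unset Printing Implicit Defensive.
Import Order.TTheory GRing.Theory Num.Theory.
Local Open Scope ring_scope.

Section Defs.
Variable V : finType.

Definition is_complex (G : {set {set V}}) : Prop :=
  (forall x, x \in G -> x != set0) /\
  (forall x y, x \in G -> y != set0 -> y \subset x -> y \in G).

Definition omega (y : {set V}) : rat := (-1) ^+ (#|y|.-1).

Definition chi (A : {set {set V}}) : rat := \sum_(y in A) omega y.

Definition conn (G : {set {set V}}) : 'M[rat]_#|G| :=
  \matrix_(i, j) (if (enum_val i :&: enum_val j) != set0 then 1 else 0).

Definition star (G : {set {set V}}) (x : {set V}) : {set {set V}} :=
  [set y in G | x \subset y].

Definition Sx (G : {set {set V}}) (x : {set V}) : {set {set V}} :=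
  [set y in G | (y \proper x) || (x \proper y)].

(* Clique complex of the subgraph of G_1 induced on A: the non-empty sets of
   pairwise adjacent (i.e. comparable under inclusion) elements of A. *)
Definition clique_complex (A : {set {set V}}) : {set {set {set V}}} :=
  [set C : {set {set V}} | [&& C \subset A, C != set0 &
     [forall y in C, forall z in C, (y != z) ==> ((y \subset z) || (z \subset y))]]].

Definition chi_graph (A : {set {set V}}) : rat :=
  \sum_(C in clique_complex A) (-1) ^+ (#|C|.-1).

End Defs.

(* Main.v *)
Require Import Defs.
From mathcomp Require Import all_boot all_order all_algebra.
From mathcomp Require Import ring lra zify.
Import GRing.Theory Num.Theory.
Local Open Scope ring_scope.

Section P.
Variable V : finType.
Implicit Types (m lo u w x y z : {set V}) (A C D : {set {set V}}).

Definition sg m : rat := (-1) ^+ #|m|.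

Lemma sg_sq m : sg m * sg m = 1.
Proof. by rewrite /sg -exprD -signr_odd oddD addbb. Qed.

Definition tog (d : V) m := if d \in m then m :\ d else d |: m.

Lemma togK d : involutive (tog d).
Proof.
move=> m; rewrite {2}/tog; case: (boolP (d \in m)) => dm.
  by rewrite /tog !inE eqxx /= setD1K.
by rewrite /tog setU11 setU1K.
Qed.

Lemma sg_tog d m : sg (tog d m) = - sg m.
Proof.
rewrite /sg /tog; case: ifP => dm.
  by rewrite -[in RHS](setD1K dm) cardsU1 !inE eqxx /= exprS mulN1r opprK.
by rewrite cardsU1 dm exprS mulN1r.
Qed.

Lemma sum_tog0 (P : pred {set V}) d :
  (forall m, P (tog d m) = P m) -> \sum_(m | P m) sg m = 0.
Proof.
move=> HP; set S := \sum_(m | P m) sg m.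
have : S = - S.
  rewrite {1}/S (reindex_inj (inv_inj (togK d))) /= -sumrN.
  by apply: eq_big => m; [rewrite HP | rewrite sg_tog].
move=> h; lra.
Qed.

Lemma sum_interval lo u :
  \sum_(m : {set V} | (lo \subset m) && (m \subset u)) sg m = (lo == u)%:R * sg u.
Proof.
case: (eqVneq lo u) => [->|neq].
  rewrite mul1r (big_pred1 u) // => m /=.
  by rewrite eq_sym eqEsubset.
rewrite mul0r; case: (boolP (lo \subset u)) => sub; last first.
  rewrite big1 // => m /andP[h1 h2]; case/negP: sub; exact: subset_trans h1 h2.
have : lo \proper u by rewrite properEneq neq sub.
case/properP => _ [d du dlo].
apply: (@sum_tog0 (fun m => (lo \subset m) && (m \subset u)) d) => m /=; rewrite /tog; case: ifP => dm.
  rewrite subsetD1 dlo andbT; congr andb.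
  apply/idP/idP => h; last exact: subset_trans (subD1set _ _) h.
  by rewrite -(setD1K dm) subUset sub1set du h.
rewrite subUset sub1set du /=; congr andb.
apply/idP/idP => h; last exact: subset_trans h (subsetUr _ _).
apply/subsetP => z zl; have := subsetP h z zl; rewrite !inE.
by case: eqP => // ez; rewrite -ez zl in dlo.
Qed.

Definition chainb (C : {set {set V}}) :=
  [forall y in C, forall z in C, (y != z) ==> ((y \subset z) || (z \subset y))].

Definition E (A : {set {set V}}) : rat :=
  \sum_(C : {set {set V}} | (C \subset A) && chainb C) (-1) ^+ #|C|.

Lemma chainP C : reflect (forall y z, y \in C -> z \in C -> y != z ->
   (y \subset z) || (z \subset y)) (chainb C).
Proof.
apply: (iffP forall_inP) => [h y z yC zC nyz | h y yC].
  by move/forall_inP: (h y yC) => /(_ z zC) /implyP; apply.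
by apply/forall_inP => z zC; apply/implyP; apply: h.
Qed.

Lemma chain_sub C D : C \subset D -> chainb D -> chainb C.
Proof.
move=> /subsetP sCD /chainP h; apply/chainP => y z yC zC; apply: h; exact: sCD.
Qed.

Definition ismin m (C : {set {set V}}) := (m \in C) && [forall y in C, m \subset y].

Lemma min_unique C : C != set0 -> chainb C ->
  exists m0, forall m, ismin m C = (m == m0).
Proof.
move=> /set0Pn [y0 y0C] ch.
case: (arg_minnP (fun m : {set V} => #|m|) y0C) => m0 m0C m0min.
exists m0 => m.
have m0is : ismin m0 C.
  apply/andP; split; first exact: m0C.
  apply/forall_inP => y yC.
  case: (eqVneq m0 y) => [->//|ne].
  case/orP: (chainP _ ch m0 y m0C yC ne) => // sub.
  have le := m0min y yC.
  have : y == m0 by rewrite eqEcard sub le.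
  by rewrite eq_sym (negbTE ne).
apply/idP/eqP => [|->//].
case/andP => mC /forall_inP hm.
move/andP: m0is => [_ /forall_inP hm0].
by apply/eqP; rewrite eqEsubset hm // hm0.
Qed.

Lemma E_rec A : E A = 1 - \sum_(m in A) E [set y in A | m \proper y].
Proof.
rewrite /E (bigD1 set0) /=; last first.
  by rewrite sub0set; apply/chainP => y z; rewrite inE.
rewrite cards0 expr0; congr (_ + _).
rewrite -sumrN.
set Q := fun C : {set {set V}} => ((C \subset A) && chainb C) && (C != set0).
transitivity (\sum_(C | Q C) \sum_(m | ismin m C) ((-1) ^+ #|C| : rat)).
  apply: eq_bigr => C /andP[/andP[_ ch] ne].
  have [m0 hm0] := min_unique C ne ch.
  by rewrite (big_pred1 m0).
rewrite (exchange_big_dep (fun m => m \in A)) /=; last first.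
  by move=> C m /andP[/andP[/subsetP sCA _] _] /andP[mC _]; apply: sCA.
apply: eq_bigr => m mA.
rewrite -sumrN.
rewrite (reindex_onto (fun C' => m |: C') (fun C => C :\ m)) /=; last first.
  by move=> C /andP[_ /andP[mC _]]; rewrite setD1K.
apply: eq_big => C'; last first.
  move=> /andP[_ /eqP e].
  have mC' : m \notin C' by rewrite -e !inE eqxx.
  by rewrite cardsU1 mC' exprS mulN1r.
apply/idP/idP.
- case/andP => /andP [/andP[/andP[sA ch] _] /andP[_ /forall_inP mmin]] /eqP e.
  have mC' : m \notin C' by rewrite -e !inE eqxx.
  apply/andP; split.
    apply/subsetP => y yC'; rewrite inE properEneq.
    have yU : y \in m |: C' by rewrite inE yC' orbT.
    rewrite (subsetP sA _ yU) mmin // andbT.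
    by apply: contraNneq mC' => ->.
  by apply: chain_sub ch; apply: subsetUr.
- case/andP => /subsetP sub ch.
  have hy : forall y, y \in C' -> (y \in A) && (m \proper y).
    by move=> y /sub; rewrite inE.
  have mC' : m \notin C'.
    by apply/negP => /hy; rewrite properxx andbF.
  rewrite setU1K // eqxx andbT /Q /ismin setU11 /=.
  apply/andP; split; last first.
    apply/forall_inP => y /setU1P[->|/hy/andP[_ /proper_sub]] //.
  apply/andP; split; last by apply/set0Pn; exists m; rewrite setU11.
  apply/andP; split.
    by rewrite subUset sub1set mA; apply/subsetP => y /hy /andP[].
  apply/chainP => y z /setU1P[->|yC] /setU1P[->|zC].
  * by rewrite eqxx.
  * by move=> _; case/andP: (hy z zC) => _ /proper_sub ->.
  * by move=> _; case/andP: (hy y yC) => _ /proper_sub ->; rewrite orbT.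
  * by move/chainP: ch; apply.
Qed.

Lemma sum_proper_interval w u : w \subset u ->
  \sum_(m : {set V} | (w \proper m) && (m \subset u)) sg m = (w == u)%:R * sg u - sg w.
Proof.
move=> wu; rewrite -sum_interval [in RHS](bigD1 w) /=; last by rewrite subxx wu.
rewrite addrC addrK; apply: eq_bigl => m.
by rewrite properEneq eq_sym; case: (_ != _); rewrite /= ?andbT ?andbF.
Qed.

Lemma omega_sg y : y != set0 -> omega y = - sg y.
Proof.
rewrite -card_gt0 /omega /sg => h.
by rewrite -{2}(prednK h) exprS mulN1r opprK.
Qed.

Section G.
Variable G : {set {set V}}.
Hypothesis HG : is_complex G.

Lemma inG_sub u m : u \in G -> m != set0 -> m \subset u -> m \in G.
Proof. by move=> uG mn mu; apply: HG.2 uG mn mu. Qed.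

Lemma G_ne u : u \in G -> u != set0.
Proof. exact: HG.1. Qed.

Definition Aup w : rat := \sum_(u in G | w \subset u) sg u * sg w.

Lemma Aup_rec w : w \in G -> 1 - \sum_(m in G | w \proper m) Aup m = Aup w.
Proof.
move=> wG.
have -> : \sum_(m in G | w \proper m) Aup m =
    \sum_(u | (u \in G) && (w \subset u))
      \sum_(m | (m \in G) && (w \proper m) && ((u \in G) && (m \subset u))) sg u * sg m.
  rewrite /Aup.
  rewrite (exchange_big_dep (fun u => (u \in G) && (w \subset u))) //=.
  move=> m u /andP[_ wm] /andP[uG mu]; rewrite uG /=.
  exact: subset_trans (proper_sub wm) mu.
transitivity (1 - \sum_(u | (u \in G) && (w \subset u)) sg u * ((w == u)%:R * sg u - sg w)).
  congr (_ - _); apply: eq_bigr => u /andP[uG wu].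
  rewrite -sum_proper_interval // mulr_sumr; apply: eq_bigl => m.
  rewrite uG /=; case: (boolP (w \proper m)); rewrite ?andbF //= => wm.
  case: (boolP (m \subset u)); rewrite ?andbF ?andbT //= => mu.
  apply/idP; apply: (@inG_sub u m uG _ mu).
  by rewrite -proper0; apply: sub_proper_trans wm; apply: sub0set.
under eq_bigr => u _ do rewrite mulrBr mulrA.
rewrite sumrB (bigD1 w) /=; last by rewrite wG subxx.
rewrite eqxx mulr1 sg_sq big1; last first.
  by move=> u /andP[_ nuw]; rewrite eq_sym (negbTE nuw) mulr0 mul0r.
by rewrite addr0 opprB addrC subrK.
Qed.

Definition T lo x := [set y in G | (lo \proper y) && ((y \proper x) || (x \proper y))].
Definition F lo x := if lo \proper x then - (sg x * sg lo) * Aup x else Aup lo.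

Lemma T_sub lo x m : m \in T lo x -> [set y in T lo x | m \proper y] = T m x.
Proof.
rewrite inE => /andP[_ /andP[lom _]].
apply/setP => y; rewrite !inE.
case: (boolP (m \proper y)) => my; rewrite ?andbF ?andbT //=.
by rewrite (proper_trans lom my).
Qed.

Lemma proper_asym (a b : {set V}) : a \proper b -> b \proper a -> False.
Proof. by move=> ab ba; have := proper_trans ab ba; rewrite properxx. Qed.

Lemma main_ind x : x \in G -> forall n lo, (#|V| - #|lo| < n)%N ->
  (lo = set0 \/ lo \in G) -> (lo \proper x) || (x \proper lo) -> E (T lo x) = F lo x.
Proof.
move=> xG; elim=> [//|n IH] lo hn hlo hcmp.
rewrite E_rec.
rewrite (eq_bigr (fun m => F m x)); last first.
  move=> m mT; rewrite T_sub //; apply: IH.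
  - move: mT; rewrite inE => /andP[_ /andP[lom _]].
    have := proper_card lom; have := max_card m.
    move: hn; clear; lia.
  - by right; move: mT; rewrite inE => /andP[].
  - by move: mT; rewrite inE => /andP[_ /andP[]].
case/orP: hcmp => [lox|xlo].
- have lonx : lo != x by move: lox; rewrite properEneq => /andP[].
  have S1 : \sum_(m : {set V} | (lo \proper m) && (m \proper x)) sg m = - sg lo - sg x.
    have := @sum_proper_interval lo x (proper_sub lox).
    rewrite (bigD1 x) /=; last by rewrite lox subxx.
    rewrite (negbTE lonx) mul0r sub0r => e.
    have e2 : \sum_(m : {set V} | (lo \proper m) && (m \proper x)) sg m =
        \sum_(m : {set V} | (lo \proper m) && (m \subset x) && (m != x)) sg m.
      by apply: eq_bigl => m; rewrite [m \proper x]properEneq; case: (m != x); rewrite /= ?andbT ?andbF.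
    rewrite e2; move: e; set a := \sum_(m : {set V} | _) _; move=> e; lra.
  rewrite (bigID (fun m => m \proper x)) /=.
  have -> : \sum_(m : {set V} | (m \in T lo x) && (m \proper x)) F m x =
      - (sg x * Aup x) * \sum_(m : {set V} | (lo \proper m) && (m \proper x)) sg m.
    rewrite mulr_sumr; apply: eq_big => m.
      rewrite inE; case: (boolP (m \proper x)) => mx; rewrite ?andbF ?andbT //=.
      case: (boolP (lo \proper m)) => lm; rewrite ?andbF ?andbT //=.
      apply: (@inG_sub x m xG _ (proper_sub mx)).
      by rewrite -proper0; apply: sub_proper_trans lm; apply: sub0set.
    move=> /andP[_ mx]; rewrite /F mx.
    by rewrite !mulNr -!mulrA [Aup x * _]mulrC.
  have -> : \sum_(m : {set V} | (m \in T lo x) && ~~ (m \proper x)) F m x =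
      \sum_(m in G | x \proper m) Aup m.
    apply: eq_big => m.
      rewrite inE; case: (boolP (m \proper x)) => mx; rewrite ?andbF ?andbT //=.
        by case: (boolP (x \proper m)) => xm; [case: (@proper_asym m x mx xm) | rewrite andbF].
      case: (boolP (x \proper m)) => xm; rewrite ?andbF ?andbT //=.
      by rewrite (proper_trans lox xm) andbT.
    by move=> /andP[_ nmx]; rewrite /F (negbTE nmx).
  have := @Aup_rec x xG; rewrite S1 /F lox.
  set A := Aup x; set Sx := \sum_(m in G | _) _.
  have := sg_sq x; set s := sg x; set t := sg lo.
  move=> hs e.
  have -> : Sx = 1 - A by lra.
  apply/eqP; rewrite -subr_eq0.
  have -> : 1 - (- (s * A) * (- t - s) + (1 - A)) - - (s * t) * A = (1 - s * s) * A by ring.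
  by rewrite hs subrr mul0r.
- have nlox : ~~ (lo \proper x) by apply/negP => h; apply: (@proper_asym lo x h xlo).
  rewrite /F (negbTE nlox).
  have loG : lo \in G.
    by case: hlo => // e; move: xlo; rewrite e properE sub0set andbF.
  rewrite -(@Aup_rec lo loG); congr (_ - _).
  apply: eq_big => m.
    rewrite inE; case: (boolP (lo \proper m)) => lm; rewrite ?andbF ?andbT //=.
    by rewrite (proper_trans xlo lm) orbT andbT.
  rewrite inE => /andP[_ /andP[lm _]].
  have xm := proper_trans xlo lm.
  have nmx : ~~ (m \proper x) by apply/negP => h; apply: (@proper_asym m x h xm).
  by rewrite (negbTE nmx).
Qed.

Lemma E_chi_graph A : E A = 1 - chi_graph A.
Proof.
rewrite /E /chi_graph (bigD1 set0) /=; last first.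
  by rewrite sub0set; apply/chainP => y z; rewrite inE.
rewrite cards0 expr0 -sumrN; congr (_ + _).
apply: eq_big => C.
  rewrite inE /chainb; case: (C \subset A); case: (C != set0); by rewrite /= ?andbT ?andbF.
move=> /andP[_ ne]; rewrite -card_gt0 in ne.
by rewrite -{1}(prednK ne) exprS mulN1r.
Qed.

Lemma T0 x : T set0 x = Sx G x.
Proof.
apply/setP => y; rewrite !inE proper0.
by case: (boolP (y \in G)) => //= /G_ne ->.
Qed.

Lemma part2 x : x \in G -> chi (star G x) = 1 - chi_graph (Sx G x).
Proof.
move=> xG; rewrite -E_chi_graph -T0.
rewrite (@main_ind x xG (#|V| - #|@set0 V|).+1 set0) //; last first.
  - by rewrite proper0 G_ne.
  - by left.
rewrite /F proper0 G_ne // /sg cards0 expr0 mulr1 -/(sg x).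
rewrite /chi /Aup mulr_sumr; apply: eq_big => y.
  by rewrite !inE.
rewrite /star inE => /andP[yG _].
by rewrite omega_sg ?G_ne // mulNr mulrC -mulrA sg_sq mulr1.
Qed.

Lemma inner w x : w \in G ->
  \sum_(y : {set V} | (y \in G) && (y \subset w)) (if x :&: y != set0 then 1 else 0) * omega y
  = (w \subset x)%:R.
Proof.
move=> wG.
rewrite (bigID (fun y => x :&: y != set0)) /= [X in _ + X]big1; last first.
  by move=> y /andP[_ /negbTE ->]; rewrite mul0r.
rewrite addr0.
have -> : \sum_(y : {set V} | (y \in G) && (y \subset w) && (x :&: y != set0))
     (if x :&: y != set0 then 1 else 0) * omega y =
   - \sum_(y : {set V} | (y \subset w) && (x :&: y != set0)) sg y.
  rewrite -sumrN; apply: eq_big => y.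
    case: (boolP (x :&: y != set0)) => nxy; rewrite ?andbF ?andbT //=.
    case: (boolP (y \subset w)) => yw; rewrite ?andbF ?andbT //=.
    apply: (@inG_sub w y wG _ yw).
    apply: contraNneq nxy => ->; by rewrite setI0.
  move=> /andP[_ nxy]; rewrite nxy mul1r omega_sg //.
  by apply: contraNneq nxy => ->; rewrite setI0.
have h0 : \sum_(y : {set V} | (y \subset w)) sg y = 0.
  transitivity (\sum_(m : {set V} | (set0 \subset m) && (m \subset w)) sg m).
    by apply: eq_bigl => y; rewrite sub0set.
  by rewrite sum_interval eq_sym (negbTE (G_ne w wG)) mul0r.
have h1 : \sum_(y : {set V} | (y \subset w) && ~~ (x :&: y != set0)) sg y = (w \subset x)%:R.
  have := sum_interval set0 (w :\: x); rewrite eq_sym setD_eq0 => e.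
  rewrite (_ : (w \subset x)%:R = (w \subset x)%:R * sg (w :\: x)); last first.
    case: (boolP (w \subset x)) => wx; rewrite ?mul0r //.
    by move: wx; rewrite -setD_eq0 => /eqP ->; rewrite /sg cards0 expr0 mulr1.
  rewrite -e; apply: eq_bigl => y.
  by rewrite sub0set subsetD negbK setI_eq0 disjoint_sym.
move: h0; rewrite (bigID (fun y => x :&: y != set0)) /= h1 => h; lra.
Qed.

Definition gm : 'M[rat]_#|G| := \matrix_(i, j) (omega (enum_val i) * omega (enum_val j) *
   \sum_(w in G | (enum_val i \subset w) && (enum_val j \subset w)) omega w).

Lemma conn_gm : conn G *m gm = 1%:M.
Proof.
apply/matrixP => i k; rewrite !mxE.
have xG : enum_val i \in G by apply: enum_valP.
have zG : enum_val k \in G by apply: enum_valP.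
set x := enum_val i; set z := enum_val k.
under eq_bigr => j _ do rewrite !mxE.
set f := fun y : {set V} => (if x :&: y != set0 then 1 else 0) *
   (omega y * omega z * \sum_(w in G | (y \subset w) && (z \subset w)) omega w).
transitivity (\sum_(y in G) f y).
  by rewrite [in RHS]big_enum_val.
rewrite /f.
under eq_bigr => y _ do rewrite mulr_sumr.
under eq_bigr => y _ do rewrite mulr_sumr.
rewrite (exchange_big_dep (fun w => (w \in G) && (z \subset w))) /=; last first.
  by move=> y w _ /andP[-> /andP[]].
transitivity (\sum_(w | (w \in G) && (z \subset w)) omega z * omega w * (w \subset x)%:R).
  apply: eq_bigr => w /andP[wG zw].
  rewrite -(@inner w x wG) mulr_sumr; apply: eq_big => y.
    by rewrite wG zw /= !andbT.
  by move=> _; rewrite [RHS]mulrC -!mulrA.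
have -> : \sum_(w | (w \in G) && (z \subset w)) omega z * omega w * (w \subset x)%:R =
    \sum_(w | (w \in G) && (z \subset w) && (w \subset x)) omega z * omega w.
  rewrite [RHS]big_mkcondr /=; apply: eq_bigr => w _.
  by case: (w \subset x); rewrite ?mulr1 ?mulr0.
have -> : \sum_(w | (w \in G) && (z \subset w) && (w \subset x)) omega z * omega w =
    omega z * - \sum_(w : {set V} | (z \subset w) && (w \subset x)) sg w.
  rewrite -sumrN mulr_sumr; apply: eq_big => w.
    case: (boolP (z \subset w)) => zw; rewrite ?andbF ?andbT //=.
    case: (boolP (w \subset x)) => wx; rewrite ?andbF ?andbT //=.
    apply: (@inG_sub x w xG _ wx).
    by apply: contraNneq (G_ne z zG) => e; rewrite -subset0 -e.
  move=> /andP[/andP[_ zw] _]; rewrite (@omega_sg w) //.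
  by apply: contraNneq (G_ne z zG) => e; rewrite -subset0 -e.
rewrite sum_interval.
have -> : (i == k) = (z == x) by rewrite /x /z (inj_eq enum_val_inj) eq_sym.
case: (eqVneq z x) => [e|ne]; last by rewrite mul0r oppr0 mulr0.
rewrite e mul1r omega_sg ?G_ne // mulrNN sg_sq.
by [].
Qed.
End G.
End P.

Theorem mainTheorem10 (V : finType) (G : {set {set V}}) :
  is_complex G ->
  forall i : 'I_#|G|,
    let x := enum_val i in
    (invmx (conn G)) i i = chi (star G x) /\
    chi (star G x) = 1 - chi_graph (Sx G x).
Proof.
move=> HG i x.
have xG : x \in G by apply: enum_valP.
split; last exact: (@part2 V G HG x xG).
have h := @conn_gm V G HG.
have [u _] := mulmx1_unit h.
have -> : invmx (conn G) = gm V G.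
  by rewrite -[invmx _]mulmx1 -h mulmxA mulVmx // mul1mx.
rewrite mxE -/x (@omega_sg V x) ?(@G_ne V G HG x xG) // mulrNN sg_sq mul1r.
by apply: eq_bigl => w; rewrite inE andbb.
Qed.
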